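(* Let $n\ge3$, $m=n-1$, and consider $$(P):\ \sup\ x_{n-1}\ \text{ s.t. }\ x_1E_1+\sum_{i=2}^{n-1}x_i(E_i+E_{i-1,n})\preceq I_{n-1}\oplus 0_1,$$ with dual $(D)$. Then $\operatorname{val}(P)=0$ and $\operatorname{val}(D)=1$.
   Context: $E_{ij}\in\mathcal S^n$ is the symmetric matrix whose only nonzero entries are $1$ in positions $(i,j)$ and $(j,i)$; $E_i:=E_{ii}$. For $(P)$: $\sup\{c^Tx:\sum_ix_iA_i\preceq B\}$ the dual is $(D)$: $\inf\{B\bullet Y:A_i\bullet Y=c_i\ \forall i,\ Y\succeq0\}$, $S\bullet T=\operatorname{trace}(ST)$. *)

(* Defs.v *)
(* Scalars: an arbitrary real field R (the paper's reals are an instance). *)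
From HB Require Import structures.
From mathcomp Require Import all_boot all_order all_algebra.
Set Implicit Arguments. Unset Strict Implicit. Unset Printing Implicit Defensive.
Import Order.TTheory GRing.Theory Num.Theory.
Local Open Scope ring_scope.

Definition psd (R : realFieldType) (n : nat) (M : 'M[R]_n) : Prop :=
  M^T = M /\ forall v : 'cV[R]_n, 0 <= (v^T *m M *m v) 0 0.

Definition loewner_le (R : realFieldType) (n : nat) (S T : 'M[R]_n) : Prop :=
  psd (T - S).

Definition frob (R : realFieldType) (n : nat) (S T : 'M[R]_n) : R := \tr (S *m T).

(* E_{ij} with 1-based indices i j in {1..n}: 1 at (i,j) and (j,i), 0 elsewhere *)
Definition Emat (R : realFieldType) (n : nat) (i j : nat) : 'M[R]_n :=
  \matrix_(p < n, q < n)
    ((((p.+1 == i) && (q.+1 == j)) || ((p.+1 == j) && (q.+1 == i)))%:R).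

Definition primal_feasible (R : realFieldType) (n m : nat)
  (A : 'I_m -> 'M[R]_n) (B : 'M[R]_n) (x : 'I_m -> R) : Prop :=
  loewner_le (\sum_(i < m) x i *: A i) B.

Definition primal_obj (R : realFieldType) (m : nat) (c : 'I_m -> R) (x : 'I_m -> R) : R :=
  \sum_(i < m) c i * x i.

Definition dual_feasible (R : realFieldType) (n m : nat)
  (A : 'I_m -> 'M[R]_n) (c : 'I_m -> R) (Y : 'M[R]_n) : Prop :=
  (forall i, frob (A i) Y = c i) /\ psd Y.

Definition is_sup (R : realFieldType) (S : R -> Prop) (s : R) : Prop :=
  (forall y, S y -> y <= s) /\ (forall u, (forall y, S y -> y <= u) -> s <= u).

Definition is_inf (R : realFieldType) (S : R -> Prop) (s : R) : Prop :=
  (forall y, S y -> s <= y) /\ (forall u, (forall y, S y -> u <= y) -> u <= s).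

Definition primal_value (R : realFieldType) (n m : nat)
  (A : 'I_m -> 'M[R]_n) (B : 'M[R]_n) (c : 'I_m -> R) (v : R) : Prop :=
  is_sup (fun y => exists x, primal_feasible A B x /\ primal_obj c x = y) v.

Definition dual_value (R : realFieldType) (n m : nat)
  (A : 'I_m -> 'M[R]_n) (B : 'M[R]_n) (c : 'I_m -> R) (v : R) : Prop :=
  is_inf (fun y => exists Y, dual_feasible A c Y /\ frob B Y = y) v.

(* The concrete instance, m = n-1; constraint index k : 'I_(n-1) stands for paper index i = k+1.
   A_1 = E_1,  A_i = E_i + E_{i-1,n} (2 <= i <= n-1). *)
Definition exA (R : realFieldType) (n : nat) (k : 'I_(n.-1)) : 'M[R]_n :=
  if (k : nat) == 0%N then Emat R n 1 1
  else Emat R n k.+1 k.+1 + Emat R n k n.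

Definition exB (R : realFieldType) (n : nat) : 'M[R]_n :=
  \matrix_(p < n, q < n) (((p == q) && (p.+1 < n)%N)%:R).

Definition exc (R : realFieldType) (n : nat) (k : 'I_(n.-1)) : R :=
  ((k.+1 == n.-1)%N)%:R.

Arguments exA R n k : clear implicits.
Arguments exB R n : clear implicits.
Arguments exc R n k : clear implicits.

(* Main.v *)
Require Import Defs.
From mathcomp Require Import all_boot all_order all_algebra.
From mathcomp Require Import ring lra zify.
Set Implicit Arguments. Unset Strict Implicit. Unset Printing Implicit Defensive.
Import Order.TTheory GRing.Theory Num.Theory.
Local Open Scope ring_scope.
Section Helpers.
Variable R : realFieldType.
Variable N : nat.

Lemma sum_delta (f : 'I_N -> R) (b : 'I_N) :
  \sum_q (q == b)%:R * f q = f b.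
Proof.
rewrite (bigD1 b) //= eqxx mul1r big1 ?addr0 // => q /negPf ->; by rewrite mul0r.
Qed.

Lemma sum_delta' (f : 'I_N -> R) (b : 'I_N) :
  \sum_q f q * (q == b)%:R = f b.
Proof.
rewrite (bigD1 b) //= eqxx mulr1 big1 ?addr0 // => q /negPf ->; by rewrite mulr0.
Qed.

Lemma trace_mul (A Y : 'M[R]_N) : \tr (A *m Y) = \sum_p \sum_q A p q * Y q p.
Proof. by apply: eq_bigr => p _; rewrite mxE. Qed.

Lemma frob_delta (a b : 'I_N) (Y : 'M[R]_N) : frob (delta_mx a b) Y = Y b a.
Proof.
rewrite /frob trace_mul.
under eq_bigr => p _ do under eq_bigr => q _ do rewrite mxE.
rewrite (bigD1 a) //= [X in _ + X]big1 ?addr0.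
  under eq_bigr => q _ do rewrite eqxx /=.
  by rewrite sum_delta.
move=> p /negPf hp; apply: big1 => q _; by rewrite hp mul0r.
Qed.

Lemma form_delta (M : 'M[R]_N) (a b : 'I_N) :
  (((delta_mx a (0:'I_1))^T *m M *m delta_mx b (0:'I_1)) 0 0) = M a b.
Proof.
rewrite mxE.
under eq_bigr => j _ do (rewrite [delta_mx b 0 j 0]mxE mxE eqxx andbT;
   under eq_bigr => i _ do rewrite !mxE eqxx andbT).
rewrite (bigD1 b) //= [X in _ + X]big1 ?addr0.
  by rewrite eqxx mulr1 sum_delta.
move=> j /negPf ->; by rewrite mulr0.
Qed.

Lemma psd_diag (M : 'M[R]_N) a : psd M -> 0 <= M a a.
Proof. by case=> _ /(_ (delta_mx a 0)); rewrite form_delta. Qed.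

Lemma psd_sym (M : 'M[R]_N) a b : psd M -> M b a = M a b.
Proof. by case=> /matrixP /(_ a b); rewrite mxE. Qed.

Lemma addE (A B : 'M[R]_1) : (A+B) 0 0 = A 0 0 + B 0 0. Proof. by rewrite mxE. Qed.
Lemma sclE c (A : 'M[R]_1) : (c *: A) 0 0 = c * A 0 0. Proof. by rewrite mxE. Qed.

Lemma psd_zero (M : 'M[R]_N) a b : psd M -> M a a = 0 -> M a b = 0.
Proof.
move=> hM.
have [->//|nab] := eqVneq a b; move=> haa.
apply/eqP; apply: contraT => hab.
have hs := psd_sym a b hM.
case: (hM) => _ /(_ ((- (M b b + 1) / (2 * M a b)) *: delta_mx a 0 + delta_mx b 0)).
set t := (- (M b b + 1) / (2 * M a b)).
rewrite mulmxDr -scalemxAr linearD /= linearZ /= !mulmxDl -!scalemxAl.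
rewrite !(addE, sclE).

rewrite !form_delta haa hs.
have -> : t * (t * 0 + M a b) + (t * M a b + M b b) = M b b + 2 * t * M a b by ring.
have e : 2 * t * M a b = -(M b b + 1).
  rewrite /t. field. exact: hab.

rewrite e => h; lra.
Qed.

End Helpers.
Section H2.
Variable R : realFieldType.
Variable n' : nat.
Local Notation N := n'.+1.

Lemma qformE (M : 'M[R]_N) (v : 'cV[R]_N) :
  (v^T *m M *m v) 0 0 = \sum_j (\sum_i v i 0 * M i j) * v j 0.
Proof.
rewrite mxE; apply: eq_bigr => j _; rewrite mxE; congr (_ * _).
by apply: eq_bigr => i _; rewrite mxE.
Qed.

Lemma frobD (A B Y : 'M[R]_N) : frob (A + B) Y = frob A Y + frob B Y.
Proof. by rewrite /frob mulmxDl mxtraceD. Qed.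

Lemma Emat_diag a : (a < N)%N -> Emat R N a.+1 a.+1 = delta_mx (inord a) (inord a).
Proof.
move=> ha; apply/matrixP => p q; rewrite !mxE !eqSS orbb.
by rewrite -!val_eqE /= inordK.
Qed.

Lemma Emat_off a b : (a < N)%N -> (b < N)%N -> a != b ->
  Emat R N a.+1 b.+1 = delta_mx (inord a) (inord b) + delta_mx (inord b) (inord a).
Proof.
move=> ha hb nab; apply/matrixP => p q; rewrite !mxE !eqSS.
rewrite -!val_eqE /= !inordK //.
have nba : (b == a) = false by rewrite eq_sym (negPf nab).
case: (eqVneq (val p) a) => [->|hpa]; case: (eqVneq (val q) b) => [->|hqb] /=.
all: by rewrite ?eqxx ?(negPf nab) ?nba ?(negPf hpa) ?(negPf hqb) /= ?andbF ?orbF ?addr0 ?add0r.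
Qed.

Lemma frob_diag a Y : (a < N)%N -> frob (Emat R N a.+1 a.+1) Y = Y (inord a) (inord a).
Proof. by move=> ha; rewrite Emat_diag // frob_delta. Qed.

Lemma frob_off a b Y : (a < N)%N -> (b < N)%N -> a != b ->
  frob (Emat R N a.+1 b.+1) Y = Y (inord b) (inord a) + Y (inord a) (inord b).
Proof. by move=> ha hb nab; rewrite Emat_off // frobD !frob_delta. Qed.

End H2.
Section Main.
Variable R : realFieldType.
Variable m : nat.
Local Notation N := m.+3.

Lemma A_last (k : 'I_m.+2) : exA R N k ord_max ord_max = 0.
Proof.
case: k => k hk; rewrite /exA /=; case: ifP => _; rewrite !mxE //=.
have E1 : (N == k.+1) = false by apply/negbTE/eqP; lia.
have E2 : (N == k) = false by apply/negbTE/eqP; lia.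
by rewrite E1 E2 eqxx /= addr0.
Qed.

Lemma A_col (k : 'I_m.+2) : exA R N k (inord m) ord_max = (k == m.+1 :> nat)%:R.
Proof.
case: k => k hk; rewrite /exA /=; case: ifP => hk0; rewrite !mxE /= inordK //.
  have E1 : (N == 1%N) = false by [].
  move/eqP: hk0 => ->. by rewrite E1 !andbF.
all: try by lia.
have E1 : (N == k.+1) = false by apply/negbTE/eqP; lia.
have E3 : (m.+1 == N) = false by apply/negbTE/eqP; lia.
by rewrite E1 E3 eqxx !andbF /= add0r andbT orbF eq_sym.
Qed.

Lemma A_col' (k : 'I_m.+2) : exA R N k (inord m) ord_max = (k == ord_max)%:R.
Proof. by rewrite A_col -val_eqE. Qed.

Lemma B_entry (p q : 'I_N) : exB R N p q = ((p == q) && (p.+1 < N)%N)%:R.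
Proof. by rewrite mxE. Qed.

Lemma S_entry (x : 'I_m.+2 -> R) p q :
  (\sum_(i < m.+2) x i *: exA R N i) p q = \sum_i x i * exA R N i p q.
Proof. rewrite summxE; apply: eq_bigr => i _; by rewrite mxE. Qed.

Lemma primal_x (x : 'I_m.+2 -> R) :
  primal_feasible (exA R N) (exB R N) x -> x ord_max = 0.
Proof.
rewrite /primal_feasible /loewner_le => hM.
set M := _ - _ in hM.
have hll : M ord_max ord_max = 0.
  rewrite /M !mxE S_entry big1 ?subr0.
    by rewrite eqxx ltnn.
  by move=> i _; rewrite A_last mulr0.
have := psd_zero (inord m) hM hll.
rewrite (psd_sym (inord m) ord_max hM) /M !mxE S_entry.
under eq_bigr => i _ do rewrite A_col'.
rewrite sum_delta'.
have -> : (inord m == ord_max :> 'I_N) = false.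
  by rewrite -val_eqE /= inordK; [apply/negbTE/eqP; lia | lia].
by rewrite /= sub0r => /eqP; rewrite oppr_eq0 => /eqP.
Qed.

Lemma B_psd : psd (exB R N).
Proof.
split.
  apply/matrixP => p q; rewrite !mxE.
  by case: (eqVneq p q) => [->|h] //=; rewrite eq_sym (negPf h).
move=> v; rewrite qformE; apply: sumr_ge0 => j _.
have -> : \sum_i v i 0 * exB R N i j = v j 0 * (j.+1 < N)%:R.
  rewrite (bigD1 j) //= [X in _ + X]big1 ?addr0.
    by rewrite B_entry eqxx.
  by move=> i /negPf h; rewrite B_entry h mulr0.
by case: (j.+1 < N)%N; rewrite ?mulr1 ?mulr0 ?mul0r // -expr2 sqr_ge0.
Qed.

Lemma obj_eq x : primal_obj (exc R N) x = x ord_max.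
Proof.
rewrite /primal_obj -[RHS](sum_delta x ord_max).
apply: eq_bigr => k _; by rewrite /exc -val_eqE /= eqSS.
Qed.

Lemma primal_part : primal_value (exA R N) (exB R N) (exc R N) 0.
Proof.
split.
  by move=> y [x [hx <-]]; rewrite obj_eq primal_x.
move=> u hu; apply: hu; exists (fun _ => 0); split; last first.
  by rewrite obj_eq.
rewrite /primal_feasible /loewner_le big1 ?subr0.
  exact: B_psd.
by move=> i _; rewrite scale0r.
Qed.

Lemma frobA0 (Y : 'M[R]_N) : frob (exA R N ord0) Y = Y (inord 0) (inord 0).
Proof. by rewrite /exA /= frob_diag. Qed.

Lemma frobAk (Y : 'M[R]_N) (k : 'I_m.+2) : (0 < k)%N ->
  frob (exA R N k) Y =
  Y (inord k) (inord k) + (Y (inord m.+2) (inord k.-1) + Y (inord k.-1) (inord m.+2)).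
Proof.
case: k => [[|j] hj] //= _.
rewrite /exA /= frobD frob_diag ?frob_off //; try lia.
all: try by apply/eqP; lia.
Qed.

Lemma frobB (Y : 'M[R]_N) : frob (exB R N) Y = \sum_(p < N) ((p.+1 < N)%N)%:R * Y p p.
Proof.
rewrite /frob trace_mul; apply: eq_bigr => p _.
rewrite (bigD1 p) //= [X in _ + X]big1 ?addr0.
  by rewrite B_entry eqxx.
by move=> q /negPf h; rewrite B_entry eq_sym h mul0r.
Qed.

Lemma dual_one (Y : 'M[R]_N) : dual_feasible (exA R N) (exc R N) Y -> frob (exB R N) Y = 1.
Proof.
case=> hY hp.
have claim : forall j, (j <= m)%N -> Y (inord j) (inord j) = 0.
  elim=> [_|j IH hj].
    by have := hY ord0; rewrite frobA0 /exc.
  have h1 := psd_zero (inord m.+2) hp (IH (ltnW hj)).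
  have h2 : Y (inord m.+2) (inord j) = 0 by rewrite (psd_sym (inord j) (inord m.+2) hp).
  have hj2 : (j.+1 < m.+2)%N by lia.
  have := hY (Ordinal hj2); rewrite frobAk //= h1 h2 !addr0 /exc /=.
  have E : (j.+2 == m.+2) = false by apply/negbTE/eqP; lia.
  by rewrite E.
have h1 := psd_zero (inord m.+2) hp (claim m (leqnn m)).
have h2 : Y (inord m.+2) (inord m) = 0 by rewrite (psd_sym (inord m) (inord m.+2) hp).
have hlast : Y (inord m.+1) (inord m.+1) = 1.
  by have := hY ord_max; rewrite frobAk //= h1 h2 !addr0 /exc /= eqxx.
rewrite frobB (bigD1 (inord m.+1)) //= [X in _ + X]big1 ?addr0.
  rewrite hlast inordK; last lia.
  by rewrite ltnSn mulr1.
move=> p hpne.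
case: (leqP (p : nat) m) => hpm.
  by rewrite -[p]inord_val claim // mulr0.
have hv : (p : nat) = m.+2.
  have h4 : (p : nat) <> m.+1.
    move=> h; move/eqP: hpne; apply; apply/val_inj; rewrite /= inordK //; lia.
  have h3 : (p < N)%N := ltn_ord p.
  lia.
by rewrite hv ltnn mul0r.
Qed.

Definition Y0 : 'M[R]_N := delta_mx (inord m.+1) (inord m.+1).

Lemma Y0E a b : (a < N)%N -> (b < N)%N ->
  Y0 (inord a) (inord b) = ((a == m.+1) && (b == m.+1))%:R.
Proof. by move=> ha hb; rewrite mxE -!val_eqE /= !inordK. Qed.

Lemma Y0_psd : psd Y0.
Proof.
split.
  by apply/matrixP => p q; rewrite !mxE andbC.
move=> v; rewrite qformE; apply: sumr_ge0 => j _.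
set c : 'I_N := inord m.+1.
have -> : \sum_i v i 0 * Y0 i j = v c 0 * (j == c)%:R.
  rewrite (bigD1 c) //= [X in _ + X]big1 ?addr0.
    by rewrite mxE eqxx.
  by move=> i /negPf h; rewrite mxE h mulr0.
case: (eqVneq j c) => [->|_]; rewrite ?mulr1 ?mulr0 ?mul0r //.
by rewrite -expr2 sqr_ge0.
Qed.

Lemma Y0_feas : dual_feasible (exA R N) (exc R N) Y0.
Proof.
split; last exact: Y0_psd.
move=> k; case: (posnP k) => hk.
  have -> : k = ord0 by apply: val_inj.
  by rewrite frobA0 Y0E.
have hkN := ltn_ord k.
rewrite frobAk // !Y0E; try lia.
have E1 : (m.+2 == m.+1) = false by apply/negbTE/eqP; lia.
have E2 : (k.-1 == m.+1) = false by apply/negbTE/eqP; have := ltn_ord k; lia.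
by rewrite E1 E2 andbb /= !addr0 /exc eqSS.
all: try exact: ltnW.
all: apply: (leq_ltn_trans (leq_pred _)); exact: ltnW.
Qed.

Lemma dual_part : dual_value (exA R N) (exB R N) (exc R N) 1.
Proof.
split.
  by move=> y [Y [hY <-]]; rewrite dual_one.
move=> u hu; apply: hu; exists Y0; split; [exact: Y0_feas | exact: dual_one Y0_feas].
Qed.
End Main.

Theorem mainTheorem6 (R : realFieldType) (n : nat) (hn : (3 <= n)%N) :
  primal_value (exA R n) (exB R n) (exc R n) 0 /\
  dual_value (exA R n) (exB R n) (exc R n) 1.
Proof.
case: n hn => [|[|[|m]]] // _.
split; [exact: primal_part | exact: dual_part].
Qed.
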